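(* Let $\pi\colon (X,T)\to(Y,S)$ be a factor map between systems, with $(Y,S)$ minimal, and assume that for some $y_0\in Y$ the fiber $\pi^{-1}(\{y_0\})$ is proximal. Then $\pi$ is a proximal extension, i.e. every fiber $\pi^{-1}(\{y\})$, $y\in Y$, is proximal.
   Context: A system is a compact metric space with a homeomorphism. A factor map is a continuous surjection $\pi$ with $\pi\circ T=S\circ\pi$. Points $x_1,x_2\in X$ are proximal if $\inf_{n\in\mathbb N} d(T^nx_1,T^nx_2)=0$; a set $F\subset X$ is proximal if every pair of its points is proximal. $\pi$ is a proximal extension if every fiber $\pi^{-1}(\{y\})$ is proximal. *)

(* Defs.v *)
From Stdlib Require Import Reals.
Open Scope R_scope.

Definition is_metric {X : Type} (d : X -> X -> R) : Prop :=
  (forall x y, 0 <= d x y) /\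
  (forall x y, d x y = 0 <-> x = y) /\
  (forall x y, d x y = d y x) /\
  (forall x y z, d x z <= d x y + d y z).

Definition is_open {X : Type} (d : X -> X -> R) (U : X -> Prop) : Prop :=
  forall x, U x -> exists eps, 0 < eps /\ forall y, d x y < eps -> U y.

Definition is_closed {X : Type} (d : X -> X -> R) (A : X -> Prop) : Prop :=
  is_open d (fun x => ~ A x).

Definition is_compact {X : Type} (d : X -> X -> R) : Prop :=
  forall (I : Type) (U : I -> X -> Prop),
    (forall i, is_open d (U i)) ->
    (forall x, exists i, U i x) ->
    exists l : list I, forall x, exists i, List.In i l /\ U i x.

Definition compact_metric_space {X : Type} (d : X -> X -> R) : Prop :=
  is_metric d /\ is_compact d.

Definition continuous_map {X Y : Type} (dX : X -> X -> R) (dY : Y -> Y -> R)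
  (f : X -> Y) : Prop :=
  forall x eps, 0 < eps -> exists delta, 0 < delta /\
    forall x', dX x x' < delta -> dY (f x) (f x') < eps.

Definition homeomorphism {X : Type} (d : X -> X -> R) (T : X -> X) : Prop :=
  continuous_map d d T /\
  exists Tinv : X -> X, continuous_map d d Tinv /\
    (forall x, Tinv (T x) = x) /\ (forall x, T (Tinv x) = x).

Definition is_system {X : Type} (d : X -> X -> R) (T : X -> X) : Prop :=
  compact_metric_space d /\ homeomorphism d T.

Definition minimal {Y : Type} (d : Y -> Y -> R) (S : Y -> Y) : Prop :=
  forall A : Y -> Prop,
    is_closed d A -> (exists y, A y) -> (forall y, A y -> A (S y)) ->
    forall y, A y.

Definition factor_map {X Y : Type} (dX : X -> X -> R) (T : X -> X)
  (dY : Y -> Y -> R) (S : Y -> Y) (pi : X -> Y) : Prop :=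
  continuous_map dX dY pi /\
  (forall y, exists x, pi x = y) /\
  (forall x, pi (T x) = S (pi x)).

Definition proximal_pair {X : Type} (d : X -> X -> R) (T : X -> X) (x1 x2 : X) : Prop :=
  forall eps, 0 < eps -> exists n : nat,
    d (Nat.iter n T x1) (Nat.iter n T x2) < eps.

Definition proximal_set {X : Type} (d : X -> X -> R) (T : X -> X) (F : X -> Prop) : Prop :=
  forall x1 x2, F x1 -> F x2 -> proximal_pair d T x1 x2.

Definition fiber {X Y : Type} (pi : X -> Y) (y : Y) : X -> Prop :=
  fun x => pi x = y.

Definition proximal_extension {X Y : Type} (dX : X -> X -> R) (T : X -> X)
  (pi : X -> Y) : Prop :=
  forall y, proximal_set dX T (fiber pi y).

(* Main.v *)
Require Import Defs.
From Stdlib Require Import Reals.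
From Stdlib Require Import Lra Classical List.
Open Scope R_scope.

Section Aux.
Context {X : Type} (d : X -> X -> R) (Hd : is_metric d).

Lemma d0 x : d x x = 0.
Proof. destruct Hd as [_ [H _]]. apply H; reflexivity. Qed.
Lemma dpos x y : 0 <= d x y.
Proof. destruct Hd as [H _]. apply H. Qed.
Lemma dsym x y : d x y = d y x.
Proof. destruct Hd as [_ [_ [H _]]]. apply H. Qed.
Lemma dtri x y z : d x z <= d x y + d y z.
Proof. destruct Hd as [_ [_ [_ H]]]. apply H. Qed.

Lemma ball_open (c : X) (r : R) : is_open d (fun x => d c x < r).
Proof.
  intros x Hx. exists (r - d c x). split; [lra|].
  intros y Hy. pose proof (dtri c x y). lra.
Qed.

Lemma cluster (HK : is_compact d) (Freq : (nat -> Prop) -> Prop)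
  (Hmono : forall A B : nat -> Prop, (forall n, A n -> B n) -> Freq A -> Freq B)
  (Hunion : forall A B : nat -> Prop, Freq (fun n => A n \/ B n) -> Freq A \/ Freq B)
  (Hfalse : ~ Freq (fun _ => False))
  (Htrue : Freq (fun _ => True)) (u : nat -> X) :
  exists z, forall delta, 0 < delta -> Freq (fun n => d z (u n) < delta).
Proof.
  apply NNPP; intro Hn.
  set (I := {p : X * R | 0 < snd p /\ ~ Freq (fun n => d (fst p) (u n) < snd p)}).
  set (U := fun (i : I) (x : X) => d (fst (proj1_sig i)) x < snd (proj1_sig i)).
  assert (Hcov : forall x, exists i, U i x).
  { intro x. assert (exists delta, 0 < delta /\ ~ Freq (fun n => d x (u n) < delta)) as [delta [Hdl Hf]].
    { apply NNPP; intro H2; apply Hn; exists x; intros delta Hdl.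
      apply NNPP; intro H3; apply H2; exists delta; auto. }
    exists (exist _ (x, delta) (conj Hdl Hf)). unfold U; simpl. rewrite d0. exact Hdl. }
  destruct (HK I U (fun i => ball_open _ _) Hcov) as [l Hl].
  assert (Hfin : forall l' : list I, Freq (fun n => exists i, In i l' /\ U i (u n)) ->
           exists i, In i l' /\ Freq (fun n => U i (u n))).
  { induction l' as [|a l' IH]; intro HF.
    - exfalso; apply Hfalse. eapply Hmono; [|exact HF]. intros n [i [[] _]].
    - assert (HF2 : Freq (fun n => U a (u n) \/ exists i, In i l' /\ U i (u n))).
      { eapply Hmono; [|exact HF]. intros n [i [[<-|Hi] Hu]]; [left; auto | right; eauto]. }
      destruct (Hunion _ _ HF2) as [H|H].
      + exists a; split; [left; auto | auto].
      + destruct (IH H) as [i [Hi Hf]]. exists i; split; [right; auto | auto]. }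
  destruct (Hfin l) as [i [_ Hf]].
  { eapply Hmono; [|exact Htrue]. intros n _. apply Hl. }
  destruct (proj2_sig i) as [_ Hnf]. apply Hnf. exact Hf.
Qed.

End Aux.

Lemma iter_cont {X : Type} (d : X -> X -> R) (T : X -> X) :
  continuous_map d d T -> forall m, continuous_map d d (Nat.iter m T).
Proof.
  intros HT m; induction m as [|m IH]; intros x eps He.
  - exists eps; split; auto.
  - destruct (HT (Nat.iter m T x) eps He) as [d1 [Hd1 H1]].
    destruct (IH x d1 Hd1) as [d2 [Hd2 H2]].
    exists d2; split; auto. intros x' Hx. simpl. apply H1, H2, Hx.
Qed.

Lemma iter_pi {X Y : Type} (T : X -> X) (S : Y -> Y) (pi : X -> Y)
  (H : forall x, pi (T x) = S (pi x)) n x :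
  pi (Nat.iter n T x) = Nat.iter n S (pi x).
Proof. induction n; simpl; [reflexivity | rewrite H, IHn; reflexivity]. Qed.

Theorem mainTheorem2 (X Y : Type) (dX : X -> X -> R) (dY : Y -> Y -> R)
  (T : X -> X) (S : Y -> Y) (pi : X -> Y)
  (HX : is_system dX T) (HY : is_system dY S)
  (Hpi : factor_map dX T dY S pi)
  (Hmin : minimal dY S)
  (y0 : Y) (Hy0 : proximal_set dX T (fiber pi y0)) :
  proximal_extension dX T pi.
Proof.
  destruct HX as [[HmX HKX] [HT _]].
  destruct HY as [[HmY HKY] [HS _]].
  destruct Hpi as [Hpic [_ Hpicomm]].
  intros y x1 x2 Hx1 Hx2. unfold fiber in Hx1, Hx2.
  set (A := fun y' => forall g, 0 < g -> exists n, dY y' (Nat.iter n S y) < g).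
  assert (HA : A y0).
  { apply Hmin.
    - intros x Hx. unfold A in Hx.
      assert (exists g, 0 < g /\ forall n, ~ dY x (Nat.iter n S y) < g) as [g [Hg Hgn]].
      { apply NNPP; intro H; apply Hx; intros g Hg. apply NNPP; intro H2; apply H.
        exists g; split; auto. intros n Hn; apply H2; eauto. }
      exists (g/2); split; [lra|]. intros y' Hy' HAy'.
      destruct (HAy' (g/2) ltac:(lra)) as [n Hn]. apply (Hgn n).
      pose proof (dtri dY HmY x y' (Nat.iter n S y)). lra.
    - exists y. intros g Hg. exists O. simpl. rewrite (d0 dY HmY). exact Hg.
    - intros y' Hy' g Hg. destruct (HS y' g Hg) as [de [Hde Hc]].
      destruct (Hy' de Hde) as [n Hn]. exists (Datatypes.S n). simpl. apply Hc, Hn. }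
  set (Freq0 := fun P : nat -> Prop => forall g, 0 < g -> exists n, P n /\ dY y0 (Nat.iter n S y) < g).
  assert (F0mono : forall P Q : nat -> Prop, (forall n, P n -> Q n) -> Freq0 P -> Freq0 Q).
  { intros P Q HPQ HP g Hg. destruct (HP g Hg) as [n [Hn1 Hn2]]. eauto. }
  assert (F0union : forall P Q : nat -> Prop, Freq0 (fun n => P n \/ Q n) -> Freq0 P \/ Freq0 Q).
  { intros P Q H. apply NNPP; intro Hn. apply not_or_and in Hn as [HnP HnQ].
    assert (exists g, 0 < g /\ forall n, P n -> ~ dY y0 (Nat.iter n S y) < g) as [g1 [Hg1 H1]].
    { apply NNPP; intro H'; apply HnP; intros g Hg. apply NNPP; intro H2; apply H'.
      exists g; split; auto. intros n Pn Hn; apply H2; eauto. }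
    assert (exists g, 0 < g /\ forall n, Q n -> ~ dY y0 (Nat.iter n S y) < g) as [g2 [Hg2 H2]].
    { apply NNPP; intro H'; apply HnQ; intros g Hg. apply NNPP; intro H3; apply H'.
      exists g; split; auto. intros n Pn Hn; apply H3; eauto. }
    destruct (H (Rmin g1 g2) (Rmin_glb_lt _ _ _ Hg1 Hg2)) as [n [[Pn|Qn] Hn]].
    - apply (H1 n Pn). pose proof (Rmin_l g1 g2); lra.
    - apply (H2 n Qn). pose proof (Rmin_r g1 g2); lra. }
  assert (F0false : ~ Freq0 (fun _ => False)).
  { intro H. destruct (H 1 ltac:(lra)) as [n [[] _]]. }
  assert (F0true : Freq0 (fun _ => True)).
  { intros g Hg. destruct (HA g Hg) as [n Hn]. eauto. }
  destruct (cluster dX HmX HKX Freq0 F0mono F0union F0false F0true (fun n => Nat.iter n T x1))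
    as [z1 Hz1].
  set (Freq1 := fun P : nat -> Prop => forall de, 0 < de ->
          Freq0 (fun n => P n /\ dX z1 (Nat.iter n T x1) < de)).
  assert (F1mono : forall P Q : nat -> Prop, (forall n, P n -> Q n) -> Freq1 P -> Freq1 Q).
  { intros P Q HPQ HP de Hde. eapply F0mono; [|exact (HP de Hde)].
    intros n [H1 H2]; split; auto. }
  assert (F1union : forall P Q : nat -> Prop, Freq1 (fun n => P n \/ Q n) -> Freq1 P \/ Freq1 Q).
  { intros P Q H. apply NNPP; intro Hn. apply not_or_and in Hn as [HnP HnQ].
    assert (exists de, 0 < de /\ ~ Freq0 (fun n => P n /\ dX z1 (Nat.iter n T x1) < de)) as [d1 [Hd1 H1]].
    { apply NNPP; intro H'; apply HnP; intros de Hde. apply NNPP; intro H2; apply H'; eauto. }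
    assert (exists de, 0 < de /\ ~ Freq0 (fun n => Q n /\ dX z1 (Nat.iter n T x1) < de)) as [d2 [Hd2 H2]].
    { apply NNPP; intro H'; apply HnQ; intros de Hde. apply NNPP; intro H3; apply H'; eauto. }
    pose proof (Rmin_l d1 d2); pose proof (Rmin_r d1 d2).
    assert (HH := H (Rmin d1 d2) (Rmin_glb_lt _ _ _ Hd1 Hd2)).
    assert (HH2 : Freq0 (fun n => (P n /\ dX z1 (Nat.iter n T x1) < d1)
                   \/ (Q n /\ dX z1 (Nat.iter n T x1) < d2))).
    { eapply F0mono; [|exact HH]. intros n [[Pn|Qn] Hn]; [left|right]; split; auto; lra. }
    destruct (F0union _ _ HH2); contradiction. }
  assert (F1false : ~ Freq1 (fun _ => False)).
  { intro H. apply F0false. eapply F0mono; [|exact (H 1 ltac:(lra))]. intros n [[] _]. }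
  assert (F1true : Freq1 (fun _ => True)).
  { intros de Hde. eapply F0mono; [|exact (Hz1 de Hde)]. intros n Hn; split; auto. }
  destruct (cluster dX HmX HKX Freq1 F1mono F1union F1false F1true (fun n => Nat.iter n T x2))
    as [z2 Hz2].
  assert (Hfib : forall z x, pi x = y ->
     (forall de, 0 < de -> Freq0 (fun n => dX z (Nat.iter n T x) < de)) -> pi z = y0).
  { intros z x Hx Hz.
    assert (forall r, 0 < r -> dY y0 (pi z) < r).
    { intros r Hr. destruct (Hpic z (r/2) ltac:(lra)) as [de [Hde Hc]].
      destruct (Hz de Hde (r/2) ltac:(lra)) as [n [Hn1 Hn2]].
      specialize (Hc _ Hn1). rewrite (iter_pi T S pi Hpicomm), Hx in Hc.
      pose proof (dtri dY HmY y0 (Nat.iter n S y) (pi z)).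
      rewrite (dsym dY HmY (Nat.iter n S y) (pi z)) in H. lra. }
    pose proof (dpos dY HmY y0 (pi z)).
    assert (dY y0 (pi z) = 0).
    { destruct (Rle_lt_or_eq_dec _ _ H0) as [Hlt|Heq]; [|auto].
      specialize (H _ Hlt); lra. }
    symmetry. destruct HmY as [_ [Hz0 _]]. apply Hz0; auto. }
  assert (Hpz1 : pi z1 = y0) by (apply (Hfib z1 x1); auto).
  assert (Hpz2 : pi z2 = y0).
  { apply (Hfib z2 x2); auto. intros de Hde.
    eapply F0mono; [|exact (Hz2 de Hde 1 ltac:(lra))]. intros n [H _]; auto. }
  intros eps Heps.
  destruct (Hy0 z1 z2 Hpz1 Hpz2 (eps/3) ltac:(lra)) as [m Hm].
  destruct (iter_cont dX T HT m z1 (eps/3) ltac:(lra)) as [d1 [Hd1 Hc1]].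
  destruct (iter_cont dX T HT m z2 (eps/3) ltac:(lra)) as [d2 [Hd2 Hc2]].
  pose proof (Rmin_l d1 d2); pose proof (Rmin_r d1 d2).
  destruct (Hz2 (Rmin d1 d2) (Rmin_glb_lt _ _ _ Hd1 Hd2) (Rmin d1 d2) (Rmin_glb_lt _ _ _ Hd1 Hd2) 1 ltac:(lra))
    as [n [[Hn2 Hn1] _]].
  exists (m + n)%nat. rewrite !Nat.iter_add.
  assert (E1 := Hc1 (Nat.iter n T x1) ltac:(lra)).
  assert (E2 := Hc2 (Nat.iter n T x2) ltac:(lra)).
  set (a1 := Nat.iter m T (Nat.iter n T x1)) in *.
  set (a2 := Nat.iter m T (Nat.iter n T x2)) in *.
  set (b1 := Nat.iter m T z1) in *. set (b2 := Nat.iter m T z2) in *.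
  pose proof (dtri dX HmX a1 b1 a2). pose proof (dtri dX HmX b1 b2 a2).
  rewrite (dsym dX HmX a1 b1) in H1. lra.
Qed.
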